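(* For any $k\in\mathbb{Z}_{>0}$ and $i\in\{1,2,3\}$, suppose $\mathrm{S}_{k,i}(x,z)=\tfrac12[x;z]^TQ_{k,i}[x;z]$ and $\mathrm{B}_{k,i}(y,z)=-\tfrac12[y;z]^T\Theta_{k,i}[y;z]$. Then $\Theta_{k,i}=\Gamma^i(Q_{k,i})$ and $Q_{k,i}=\Gamma^i(\Theta_{k,i})$.
   Context: Consider $x_{k+1}=Ax_k+Bw_k$ with $x_k\in\mathbb{R}^n$, $w_k\in\mathbb{R}^m$, running payoff $\tfrac12x^T\Phi x-\tfrac{\gamma^2}{2}|w|^2$, and one-step operator $(\mathcal{S}_1\phi)(x)=\sup_{w}\{\tfrac12x^T\Phi x-\tfrac{\gamma^2}{2}|w|^2+\phi(Ax+Bw)\}$, $\mathcal{S}_{k+1}=\mathcal{S}_1\mathcal{S}_k$. Basis functions: $\psi^1(x,z)=z^Tx$, $\psi^2(x,z)=-\tfrac12(x-z)^TM(x-z)$ ($M=M^T>0$), $\psi^3(x,z)=\delta(x-z)$ ($\delta(0)=0$, $\delta(\xi)=-\infty$ otherwise). Define $\mathrm{S}_{k,i}(x,z)=(\mathcal{S}_k\psi^i(\cdot,z))(x)$ and its max-plus dual $\mathrm{B}_{k,i}(y,z)=-\sup_{x\in\mathbb{R}^n}\{\psi^i(x,y)-\mathrm{S}_{k,i}(x,z)\}$, so that $\mathrm{S}_{k,i}(x,z)=\sup_y\{\psi^i(x,y)+\mathrm{B}_{k,i}(y,z)\}$. For a symmetric block matrix $Q=\begin{bmatrix}Q^{11}&Q^{12}\\Q^{21}&Q^{22}\end{bmatrix}\in\mathbb{R}^{2n\times2n}$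 define $\Gamma^1(Q)=\begin{bmatrix}(Q^{11})^{-1}&-(Q^{11})^{-1}Q^{12}\\-Q^{21}(Q^{11})^{-1}&Q^{21}(Q^{11})^{-1}Q^{12}-Q^{22}\end{bmatrix}$ (requires $Q^{11}>0$), $\Gamma^2(Q)=\begin{bmatrix}M(Q^{11}+M)^{-1}M-M&-M(Q^{11}+M)^{-1}Q^{12}\\-Q^{21}(Q^{11}+M)^{-1}M&Q^{21}(Q^{11}+M)^{-1}Q^{12}-Q^{22}\end{bmatrix}$ (requires $Q^{11}+M>0$), $\Gamma^3(Q)=-Q$. One has $\Gamma^i\circ\Gamma^i$ equal to the identity. *)

(* Defs.v *)
From HB Require Import structures.
From mathcomp Require Import all_boot all_order all_algebra.
From mathcomp Require Import boolp classical_sets reals constructive_ereal ereal.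
Set Implicit Arguments. Unset Strict Implicit. Unset Printing Implicit Defensive.
Import Order.TTheory GRing.Theory Num.Theory.
Local Open Scope ring_scope.
Local Open Scope classical_set_scope.

Section MaxPlus.
Variable R : realType.

Definition sc (a : 'M[R]_1) : R := a ord0 ord0.

Definition qf (p : nat) (P : 'M[R]_p) (v : 'cV[R]_p) : R := sc (v^T *m P *m v).

Definition posdef (p : nat) (P : 'M[R]_p) : Prop :=
  P^T = P /\ forall v : 'cV[R]_p, v != 0 -> 0 < qf P v.

Definition S1 (n m : nat) (A : 'M[R]_n) (B : 'M[R]_(n, m)) (Phi : 'M[R]_n)
  (gamma : R) (phi : 'cV[R]_n -> \bar R) (x : 'cV[R]_n) : \bar R :=
  ereal_sup [set adde (2^-1 * qf Phi x - gamma ^+ 2 / 2 * sc (w^T *m w))%:E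
                   (phi (A *m x + B *m w)) | w in [set: 'cV[R]_m]].

Definition Sk (n m : nat) (A : 'M[R]_n) (B : 'M[R]_(n, m)) (Phi : 'M[R]_n)
  (gamma : R) (k : nat) (phi : 'cV[R]_n -> \bar R) : 'cV[R]_n -> \bar R :=
  iter k (S1 A B Phi gamma) phi.

Definition psi (n : nat) (M : 'M[R]_n) (i : nat) (x z : 'cV[R]_n) : \bar R :=
  match i with
  | 1%N => (sc (z^T *m x))%:E
  | 2%N => (- (2^-1 * qf M (x - z)))%:E
  | _ => if x - z == 0 then 0%E else (-oo)%E
  end.

Definition Ski (n m : nat) (A : 'M[R]_n) (B : 'M[R]_(n, m)) (Phi : 'M[R]_n)
  (gamma : R) (M : 'M[R]_n) (k i : nat) (x z : 'cV[R]_n) : \bar R :=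
  Sk A B Phi gamma k (fun x' => psi M i x' z) x.

Definition Bki (n m : nat) (A : 'M[R]_n) (B : 'M[R]_(n, m)) (Phi : 'M[R]_n)
  (gamma : R) (M : 'M[R]_n) (k i : nat) (y z : 'cV[R]_n) : \bar R :=
  oppe (ereal_sup [set adde (psi M i x y) (oppe (Ski A B Phi gamma M k i x z))
                | x in [set: 'cV[R]_n]]).

Definition Gamma1 (n : nat) (Q : 'M[R]_(n + n)) : 'M[R]_(n + n) :=
  let Q11 := ulsubmx Q in let Q12 := ursubmx Q in
  let Q21 := dlsubmx Q in let Q22 := drsubmx Q in
  block_mx (invmx Q11) (- (invmx Q11 *m Q12))
           (- (Q21 *m invmx Q11)) (Q21 *m invmx Q11 *m Q12 - Q22).

Definition Gamma2 (n : nat) (M : 'M[R]_n) (Q : 'M[R]_(n + n)) : 'M[R]_(n + n) :=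
  let Q11 := ulsubmx Q in let Q12 := ursubmx Q in
  let Q21 := dlsubmx Q in let Q22 := drsubmx Q in
  block_mx (M *m invmx (Q11 + M) *m M - M) (- (M *m invmx (Q11 + M) *m Q12))
           (- (Q21 *m invmx (Q11 + M) *m M)) (Q21 *m invmx (Q11 + M) *m Q12 - Q22).

Definition Gamma3 (n : nat) (Q : 'M[R]_(n + n)) : 'M[R]_(n + n) := - Q.

Definition Gamma (n : nat) (M : 'M[R]_n) (i : nat) (Q : 'M[R]_(n + n)) : 'M[R]_(n + n) :=
  match i with
  | 1%N => Gamma1 Q
  | 2%N => Gamma2 M Q
  | _ => Gamma3 Q
  end.

End MaxPlus.

(* Main.v *)
Require Import Defs.
From HB Require Import structures.
From mathcomp Require Import all_boot all_order all_algebra.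
From mathcomp Require Import boolp classical_sets reals constructive_ereal ereal.
From mathcomp Require Import ring lra.
Import Order.TTheory GRing.Theory Num.Theory.
Local Open Scope ring_scope.

Section H.
Variable R : realType.

Lemma scD (a b : 'M[R]_1) : sc (a + b) = sc a + sc b.
Proof. by rewrite /sc mxE. Qed.
Lemma scN (a : 'M[R]_1) : sc (- a) = - sc a.
Proof. by rewrite /sc mxE. Qed.
Lemma scB (a b : 'M[R]_1) : sc (a - b) = sc a - sc b.
Proof. by rewrite /sc !mxE. Qed.
Lemma scT (a : 'M[R]_1) : sc (a^T) = sc a.
Proof. by rewrite /sc mxE. Qed.
Lemma scZ c (a : 'M[R]_1) : sc (c *: a) = c * sc a.
Proof. by rewrite /sc mxE. Qed.

Lemma sc_delta p (P : 'M[R]_p) i j :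
  sc ((delta_mx i 0 : 'cV[R]_p)^T *m P *m delta_mx j 0) = P i j.
Proof. by rewrite trmx_delta -rowE -colE /sc !mxE. Qed.

Lemma qf_inj p (P1 P2 : 'M[R]_p) : P1^T = P1 -> P2^T = P2 ->
  (forall v, qf P1 v = qf P2 v) -> P1 = P2.
Proof.
move=> h1 h2 hq; apply/eqP; rewrite -subr_eq0; apply/eqP.
set P := P1 - P2.
have hP : P^T = P by rewrite /P linearB /= h1 h2.
have q0 v : qf P v = 0.
  by rewrite /qf /P mulmxBr mulmxBl scB -/(qf _ _) -/(qf _ _) hq subrr.
clearbody P; apply/matrixP => i j; rewrite [RHS]mxE.
set u : 'cV[R]_p := delta_mx i 0; set w : 'cV[R]_p := delta_mx j 0.
have e1 : sc (w^T *m P *m u) = sc (u^T *m P *m w).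
  by rewrite -scT !trmx_mul trmxK hP mulmxA.
have := q0 (u + w); rewrite /qf mulmxDr [(u + w)^T]raddfD /= !mulmxDl !scD.
have qu := q0 u; have qw := q0 w; rewrite /qf in qu qw.
rewrite qu qw e1 add0r addr0 -sc_delta -/u -/w => h.
have : 2 * sc (u^T *m P *m w) = 0 by rewrite -h mulr2n mulrDl mul1r.
by move/eqP; rewrite mulf_eq0 pnatr_eq0 /= => /eqP.
Qed.

Lemma sup_attain (T : Type) (f : T -> \bar R) (v : \bar R) (x0 : T) :
  (forall x, (f x <= v)%E) -> f x0 = v -> ereal_sup [set f x | x in [set: T]] = v.
Proof.
move=> hle h0; apply/eqP; rewrite eq_le; apply/andP; split.
  by apply: ge_ereal_sup => _ [x _ <-].
by apply: ereal_sup_ubound; exists x0.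
Qed.

Lemma sup_ub (T : Type) (f : T -> \bar R) (v : \bar R) :
  ereal_sup [set f x | x in [set: T]] = v -> forall x, (f x <= v)%E.
Proof. by move=> <- x; apply: ereal_sup_ubound; exists x. Qed.

Lemma ker_nz p (P : 'M[R]_p) : P \notin unitmx ->
  exists d : 'cV[R]_p, d != 0 /\ P *m d = 0.
Proof.
rewrite -unitmx_tr -row_free_unit -kermx_eq0 => hK.
have [i hi] : exists i, row i (kermx P^T) != 0.
  case: (pselect (exists i, row i (kermx P^T) != 0)) => // hn.
  move/eqP: hK; case; apply/row_matrixP => i; rewrite row0.
  by apply/eqP/negPn/negP => hi; apply: hn; exists i.
exists (row i (kermx P^T))^T; split.
  by apply: contra hi => /eqP h; rewrite -[row _ _]trmxK h linear0.
by rewrite -[P in P *m _]trmxK -trmx_mul -row_mul mulmx_ker row0 linear0.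
Qed.

Lemma sqn_gt0 p (d : 'cV[R]_p) : d != 0 -> 0 < sc (d^T *m d).
Proof.
move=> hd; rewrite /sc mxE.
under eq_bigr do rewrite mxE -expr2.
rewrite lt0r sumr_ge0 ?andbT; last by move=> k _; rewrite sqr_ge0.
apply/negP => /eqP h; move/negP: hd; apply; apply/eqP/matrixP => k l.
rewrite (ord1 l) [RHS]mxE.
have hge : forall k', true -> 0 <= d k' ord0 ^+ 2 by move=> k' _; rewrite sqr_ge0.
have := psumr_eq0P hge h (i:=k) isT.
by move=> /eqP; rewrite sqrf_eq0 => /eqP.
Qed.

Lemma qfZ p (P : 'M[R]_p) t v : qf P (t *: v) = t ^+ 2 * qf P v.
Proof.
by rewrite /qf linearZ /= [(t *: v)^T]linearZ /= -!scalemxAl !scZ mulrA expr2.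
Qed.

Lemma sc0 : sc (0 : 'M[R]_1) = 0. Proof. by rewrite /sc mxE. Qed.

Lemma quad_bdd p (P : 'M[R]_p) :
  (forall b : 'cV[R]_p, exists c, forall x, sc (b^T *m x) - 2^-1 * qf P x <= c) ->
  (forall d, 0 <= qf P d) /\ P \in unitmx.
Proof.
move=> hb; split.
  move=> d; have [c hc] := hb 0; rewrite leNgt; apply/negP => hq.
  set a := - qf P d / 2.
  have ha : 0 < a by rewrite /a; apply: divr_gt0; [rewrite oppr_gt0|].
  set t := (`|c| + 1) / a + 1.
  have ht : t * a = `|c| + 1 + a.
    by rewrite /t mulrDl divfK ?mul1r // gt_eqF.
  have ht1 : 1 <= t by rewrite /t lerDr divr_ge0 // ltW.
  have := hc (t *: d); rewrite trmx0 mul0mx sc0 sub0r qfZ.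
  have -> : - (2^-1 * (t ^+ 2 * qf P d)) = t ^+ 2 * a.
    by rewrite /a; field.
  have hcc : c <= `|c| by exact: ler_norm.
  have h2 : 0 <= (t - 1) * (t * a).
    by apply: mulr_ge0; [rewrite subr_ge0 | rewrite ht; apply: addr_ge0; [apply: addr_ge0|apply: ltW]].
  have h3 : t * a <= t ^+ 2 * a.
    by move: h2; rewrite mulrBl mul1r mulrA -expr2 subr_ge0.
  move=> h; lra.
apply/negPn/negP => /ker_nz [d [hd0 hPd]].
have [c hc] := hb d.
have hs := @sqn_gt0 p d hd0; set s := sc (d^T *m d) in hs.
set t := (`|c| + 1) / s.
have := hc (t *: d); rewrite qfZ.
have -> : qf P d = 0 by rewrite /qf -mulmxA hPd mulmx0 sc0.
rewrite mulr0 mulr0 subr0 -scalemxAr scZ -/s /t divfK ?gt_eqF //.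
have hcc : c <= `|c| by exact: ler_norm.
move=> h; clear -h hcc; lra.
Qed.

Lemma qf0 p (P : 'M[R]_p) : qf P 0 = 0.
Proof. by rewrite /qf mulmx0 sc0. Qed.

Lemma scTsym p (P : 'M[R]_p) (u v : 'cV[R]_p) : P^T = P ->
  sc (u^T *m P *m v) = sc (v^T *m P *m u).
Proof. by move=> hP; rewrite -scT !trmx_mul trmxK hP mulmxA. Qed.

Lemma quad_id p (P : 'M[R]_p) b x : P^T = P -> P \in unitmx ->
  sc (b^T *m x) - 2^-1 * qf P x =
  2^-1 * qf (invmx P) b - 2^-1 * qf P (x - invmx P *m b).
Proof.
move=> hP hU; set y := invmx P *m b.
have hb : b = P *m y by rewrite /y mulKVmx.
clearbody y; subst b.
have e1 : sc ((P *m y)^T *m x) = sc (y^T *m P *m x) by rewrite trmx_mul hP.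
have e2 : qf (invmx P) (P *m y) = qf P y.
  by rewrite /qf trmx_mul hP -!mulmxA (mulmxA P) mulmxV // mul1mx.
have e3 : qf P (x - y) = qf P x - sc (x^T *m P *m y) - sc (y^T *m P *m x) + qf P y.
  by rewrite /qf mulmxBr [(x - y)^T]raddfB /= !mulmxBl !scB; ring.
by rewrite e1 e2 e3 (@scTsym p P x y hP); field.
Qed.

Lemma sup_quad p (P : 'M[R]_p) (b : 'cV[R]_p) (c0 : R) :
  P^T = P -> P \in unitmx -> (forall d, 0 <= qf P d) ->
  ereal_sup [set (sc (b^T *m x) - 2^-1 * qf P x + c0)%:E | x in [set: 'cV[R]_p]]
  = (2^-1 * qf (invmx P) b + c0)%:E.
Proof.
move=> hP hU hpsd.
apply: (@sup_attain _ (fun x => (sc (b^T *m x) - 2^-1 * qf P x + c0)%:E) _ (invmx P *m b)).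
  move=> x; rewrite lee_fin lerD2r quad_id // gerBl.
  by apply: mulr_ge0; [rewrite invr_ge0 ler0n|].
by rewrite quad_id // subrr qf0 mulr0 subr0.
Qed.

Lemma qf_block p (a b c d : 'M[R]_p) (y z : 'cV[R]_p) :
  qf (block_mx a b c d) (col_mx y z) =
  qf a y + sc (y^T *m b *m z) + sc (z^T *m c *m y) + qf d z.
Proof.
rewrite /qf tr_col_mx mul_row_block mul_row_col !mulmxDl !scD.
rewrite -!/(sc _); ring.
Qed.

Lemma scswap p (b : 'M[R]_p) (x z : 'cV[R]_p) :
  sc (z^T *m b^T *m x) = sc (x^T *m b *m z).
Proof. by rewrite -scT !trmx_mul !trmxK mulmxA. Qed.

Lemma invmxMM p (U V : 'M[R]_p) : U \in unitmx -> V \in unitmx ->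
  invmx (U *m V) = invmx V *m invmx U.
Proof.
move=> hU hV; have hW : U *m V \in unitmx by rewrite unitmx_mul hU hV.
rewrite -[RHS]mul1mx -(mulVmx hW) -!mulmxA (mulmxA V) mulmxV // mul1mx.
by rewrite mulmxV // mulmx1.
Qed.

Lemma posdef_unit p (M : 'M[R]_p) : posdef M -> M \in unitmx.
Proof.
move=> [_ hM]; apply/negPn/negP => /ker_nz [v [hv hMv]].
by have := hM v hv; rewrite /qf -mulmxA hMv mulmx0 sc0 ltxx.
Qed.

Lemma qf_split p (P1 P2 : 'M[R]_(p + p)) : P1^T = P1 -> P2^T = P2 ->
  (forall y z, qf P1 (col_mx y z) = qf P2 (col_mx y z)) -> P1 = P2.
Proof.
move=> h1 h2 h; apply: qf_inj => // v.
by rewrite -[v]vsubmxK h.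
Qed.

Lemma case1 p (a b d : 'M[R]_p) (Th : 'M[R]_(p + p)) :
  a^T = a -> d^T = d -> Th^T = Th ->
  (forall y z, ereal_sup [set (sc (y^T *m x) - 2^-1 *
      qf (block_mx a b b^T d) (col_mx x z))%:E | x in [set: 'cV[R]_p]]
      = (2^-1 * qf Th (col_mx y z))%:E) ->
  Th = Gamma1 (block_mx a b b^T d) /\ block_mx a b b^T d = Gamma1 Th.
Proof.
move=> ha hd hT H.
have K1 y z x : sc (y^T *m x) - 2^-1 * qf (block_mx a b b^T d) (col_mx x z) =
    sc ((y - b *m z)^T *m x) - 2^-1 * qf a x + (- (2^-1 * qf d z)).
  rewrite qf_block raddfB /= mulmxBl scB trmx_mul scswap.
  by field.
have [hpsd hU] : (forall v, 0 <= qf a v) /\ a \in unitmx.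
  apply: quad_bdd => b'; exists (2^-1 * qf Th (col_mx b' 0)) => x.
  have := @sup_ub _ _ _ (H b' 0) x.
  by rewrite lee_fin K1 mulmx0 subr0 qf0 mulr0 oppr0 addr0.
have hq y z : qf Th (col_mx y z) = qf (invmx a) (y - b *m z) - qf d z.
  have := H y z.
  rewrite (eq_imagel (f' := fun x => (sc ((y - b *m z)^T *m x) - 2^-1 * qf a x
     + (- (2^-1 * qf d z)))%:E)); last by move=> x _; rewrite K1.
  rewrite sup_quad // => /eqP; rewrite eqe => /eqP h.
  have e : qf Th (col_mx y z) = 2 * (2^-1 * qf Th (col_mx y z)) by field.
  by rewrite e -h; field.
have hia : (invmx a)^T = invmx a by rewrite trmx_inv ha.
have G1E : Gamma1 (block_mx a b b^T d) = block_mx (invmx a) (- (invmx a *m b))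
    (- (b^T *m invmx a)) (b^T *m invmx a *m b - d).
  by rewrite /Gamma1 block_mxKul block_mxKur block_mxKdl block_mxKdr.
have hTh : Th = Gamma1 (block_mx a b b^T d).
  apply: qf_split => //.
    rewrite G1E tr_block_mx !raddfN /= !trmx_mul trmxK hia raddfB /= !trmx_mul.
    by rewrite trmxK hia hd mulmxA.
  move=> y z; rewrite hq G1E qf_block.
  rewrite /qf mulmxBr [(y - b *m z)^T]raddfB /= trmx_mul !mulmxBl !mulmxBr.
  rewrite !mulmxN !mulNmx !mulmxA !scB !scN mulmxBl scB; ring.
split => //.
rewrite hTh G1E /Gamma1 block_mxKul block_mxKur block_mxKdl block_mxKdr invmxK.
have hU' : invmx a \in unitmx by rewrite unitmx_inv.
congr block_mx.
- by rewrite mulmxN mulmxA mulmxV // mul1mx opprK.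
- by rewrite mulNmx mulmxKV // opprK.
- rewrite mulNmx mulmxN mulmxKV // mulNmx opprK mulmxA.
  by rewrite opprB addrC subrK.
Qed.

Lemma case2 p (M a b d : 'M[R]_p) (Th : 'M[R]_(p + p)) :
  posdef M -> a^T = a -> d^T = d -> Th^T = Th ->
  (forall y z, ereal_sup [set (- (2^-1 * qf M (x - y)) - 2^-1 *
      qf (block_mx a b b^T d) (col_mx x z))%:E | x in [set: 'cV[R]_p]]
      = (2^-1 * qf Th (col_mx y z))%:E) ->
  Th = Gamma2 M (block_mx a b b^T d) /\ block_mx a b b^T d = Gamma2 M Th.
Proof.
move=> hMp ha hd hT H.
have hMU := @posdef_unit p M hMp; have hMs : M^T = M by case: hMp.
have K2 y z x : - (2^-1 * qf M (x - y)) - 2^-1 * qf (block_mx a b b^T d) (col_mx x z) =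
    sc ((M *m y - b *m z)^T *m x) - 2^-1 * qf (a + M) x
    + (- (2^-1 * qf M y) - 2^-1 * qf d z).
  rewrite qf_block raddfB /= mulmxBl scB trmx_mul scswap trmx_mul hMs.
  have -> : qf (a + M) x = qf a x + qf M x.
    by rewrite /qf mulmxDr mulmxDl scD.
  have -> : qf M (x - y) = qf M x - sc (x^T *m M *m y) - sc (y^T *m M *m x) + qf M y.
    by rewrite /qf mulmxBr [(x - y)^T]raddfB /= !mulmxBl !scB; ring.
  by rewrite (@scTsym p M x y hMs) scswap; field.
have hPs : (a + M)^T = a + M by rewrite raddfD /= ha hMs.
have [hpsd hU] : (forall v, 0 <= qf (a + M) v) /\ a + M \in unitmx.
  apply: quad_bdd => b'; set y0 := invmx M *m b'.
  exists (2^-1 * qf Th (col_mx y0 0) + 2^-1 * qf M y0) => xx.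
  have := @sup_ub _ _ _ (H y0 0) xx.
  rewrite lee_fin K2 mulmx0 subr0 qf0 mulr0 subr0 /y0 mulKVmx //.
  move=> h; clear -h; lra.
set P := a + M in hPs hpsd hU K2.
have hq y z : qf Th (col_mx y z) =
    qf (invmx P) (M *m y - b *m z) - qf M y - qf d z.
  have := H y z.
  rewrite (eq_imagel (f' := fun x => (sc ((M *m y - b *m z)^T *m x) - 2^-1 * qf P x
     + (- (2^-1 * qf M y) - 2^-1 * qf d z))%:E)); last by move=> x _; rewrite K2.
  rewrite sup_quad // => /eqP; rewrite eqe => /eqP h.
  have e : qf Th (col_mx y z) = 2 * (2^-1 * qf Th (col_mx y z)) by field.
  by rewrite e -h; field.
have hiP : (invmx P)^T = invmx P by rewrite trmx_inv hPs.
have G2E : Gamma2 M (block_mx a b b^T d) = block_mx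
    (M *m invmx P *m M - M) (- (M *m invmx P *m b))
    (- (b^T *m invmx P *m M)) (b^T *m invmx P *m b - d).
  by rewrite /Gamma2 block_mxKul block_mxKur block_mxKdl block_mxKdr.
have hTh : Th = Gamma2 M (block_mx a b b^T d).
  apply: qf_split => //.
    rewrite G2E tr_block_mx !raddfN /= !raddfB /= !trmx_mul !trmxK hiP hd hMs.
    by rewrite !mulmxA.
  move=> y z; rewrite hq G2E qf_block.
  rewrite /qf mulmxBr [(M *m y - b *m z)^T]raddfB /= !trmx_mul hMs !mulmxBl !mulmxBr.
  rewrite !mulmxN !mulNmx !mulmxA !scB !scN ?mulmxBl ?mulmxBr ?scB; ring.
split => //.
rewrite hTh G2E /Gamma2 block_mxKul block_mxKur block_mxKdl block_mxKdr subrK.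
have hiU : invmx P \in unitmx by rewrite unitmx_inv.
have hMiU : M *m invmx P \in unitmx by rewrite unitmx_mul hMU hiU.
rewrite invmxMM // invmxMM // invmxK.
congr block_mx.
- by rewrite mulKVmx // -mulmxA mulVmx // mulmx1 /P addrK.
- by rewrite mulmxN opprK mulKVmx // !mulmxA mulmxKV // mulmxV // mul1mx.
- by rewrite !mulNmx opprK !mulmxA mulmxK // mulmxKV // mulmxKV.
- rewrite mulNmx mulmxN !mulmxA !mulNmx opprK mulmxK // mulmxKV // mulmxKV //.
  by rewrite opprB addrC subrK.
Qed.

Lemma case3 p (Q Th : 'M[R]_(p + p)) : Q^T = Q -> Th^T = Th ->
  (forall y z, ereal_sup [set adde (if x - y == 0 then 0%E else (-oo)%E)
      ((- (2^-1 * qf Q (col_mx x z)))%:E) | x in [set: 'cV[R]_p]]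
      = (2^-1 * qf Th (col_mx y z))%:E) ->
  Th = - Q /\ Q = - Th.
Proof.
move=> hQ hT H.
have hTh : Th = - Q.
  apply: qf_split => //; first by rewrite raddfN /= hQ.
  move=> y z; have := H y z.
  rewrite (@sup_attain _ _ ((- (2^-1 * qf Q (col_mx y z)))%:E) y).
  - move=> /eqP; rewrite eqe => /eqP h.
    have e : qf Th (col_mx y z) = 2 * (2^-1 * qf Th (col_mx y z)) by field.
    by rewrite e -h /qf mulmxN mulNmx scN; field.
  - move=> x; case: eqP => [h|_]; last by apply: leNye.
    by move/eqP: h; rewrite subr_eq0 => /eqP ->; rewrite /adde /= add0r.
  - by rewrite subrr eqxx /adde /= add0r.
by split => //; rewrite hTh opprK.
Qed.
End H.

Theorem theorem3p5 (R : realType) (n m : nat) (A : 'M[R]_n) (B : 'M[R]_(n, m))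
  (Phi : 'M[R]_n) (gamma : R) (M : 'M[R]_n) (k i : nat)
  (Q Theta : 'M[R]_(n + n)) :
  posdef M ->
  (0 < k)%N -> (1 <= i <= 3)%N ->
  Q^T = Q -> Theta^T = Theta ->
  (forall x z : 'cV[R]_n,
     Ski A B Phi gamma M k i x z = (2^-1 * qf Q (col_mx x z))%:E) ->
  (forall y z : 'cV[R]_n,
     Bki A B Phi gamma M k i y z = (- (2^-1 * qf Theta (col_mx y z)))%:E) ->
  Theta = Gamma M i Q /\ Q = Gamma M i Theta.
Proof.
move=> hM _ hi hQ hT HS HB.
have HB' y z : ereal_sup [set adde (psi M i x y) ((- (2^-1 * qf Q (col_mx x z)))%:E)
    | x in [set: 'cV[R]_n]] = (2^-1 * qf Theta (col_mx y z))%:E.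
  have := HB y z; rewrite /Bki.
  rewrite (eq_imagel (f' := fun x => adde (psi M i x y)
    ((- (2^-1 * qf Q (col_mx x z)))%:E))); last by move=> x _; rewrite HS.
  by move=> /eqP; rewrite eqe_oppLR -EFinN opprK => /eqP.
move: hi HB'; case: i {HS HB} => [|[|[|[|i]]]] // _ HB'.
- have [a [b [c [d hQb]]]] : exists a b c d, Q = block_mx a b c d.
    by exists (ulsubmx Q), (ursubmx Q), (dlsubmx Q), (drsubmx Q); rewrite submxK.
  subst Q; move: hQ; rewrite tr_block_mx => /eq_block_mx [ha _ hb hd].
  subst c; exact: case1.
- have [a [b [c [d hQb]]]] : exists a b c d, Q = block_mx a b c d.
    by exists (ulsubmx Q), (ursubmx Q), (dlsubmx Q), (drsubmx Q); rewrite submxK.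
  subst Q; move: hQ; rewrite tr_block_mx => /eq_block_mx [ha _ hb hd].
  subst c; exact: case2.
- exact: case3.
Qed.
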